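(* For every $n\ge 4$, the number of magic quad squares in the EvenQuads-$2^n$ deck is \[2^n(2^n-1)(2^n-2)(2^n-4)(2^n-8)\cdot\Big(10 + 85(2^n-16) + 43(2^n-16)(2^n-32) + (2^n-16)(2^n-32)(2^n-64)\Big).\]
   Context: The EvenQuads-$2^n$ deck consists of $2^n$ cards identified with the integers $0,1,\dots,2^n-1$. Four cards $a,b,c,d$ form a quad if and only if $a\oplus b\oplus c\oplus d=0$, where $\oplus$ is bitwise XOR. A quad square is a $4\times4$ array of $16$ pairwise distinct cards; it is magic if each of its four rows, each of its four columns, and each of its two diagonals forms a quad. *)

(* Defs.v *)
From mathcomp Require Import all_boot.
Set Implicit Arguments. Unset Strict Implicit. Unset Printing Implicit Defensive.

Definition card (n : nat) := 'I_(2 ^ n).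

Definition is_quad (n : nat) (a b c d : card n) : bool :=
  Nat.lxor (Nat.lxor (Nat.lxor a b) c) d == 0.

Definition array44 (n : nat) := {ffun 'I_4 * 'I_4 -> card n}.

Definition ix (k : nat) : 'I_4 := inord k.

Definition quad_square (n : nat) (A : array44 n) : bool := injectiveb A.

Definition row_quad n (A : array44 n) (i : 'I_4) : bool :=
  is_quad (A (i, ix 0)) (A (i, ix 1)) (A (i, ix 2)) (A (i, ix 3)).
Definition col_quad n (A : array44 n) (j : 'I_4) : bool :=
  is_quad (A (ix 0, j)) (A (ix 1, j)) (A (ix 2, j)) (A (ix 3, j)).
Definition diag_quad n (A : array44 n) : bool :=
  is_quad (A (ix 0, ix 0)) (A (ix 1, ix 1)) (A (ix 2, ix 2)) (A (ix 3, ix 3)).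
Definition antidiag_quad n (A : array44 n) : bool :=
  is_quad (A (ix 0, ix 3)) (A (ix 1, ix 2)) (A (ix 2, ix 1)) (A (ix 3, ix 0)).

Definition magic_quad_square (n : nat) (A : array44 n) : bool :=
  [&& quad_square A, [forall i, row_quad A i], [forall j, col_quad A j],
      diag_quad A & antidiag_quad A].

(* Main.v *)
Require Import Defs.
From mathcomp Require Import all_boot zify ring.
From Stdlib Require PeanoNat Lia.
Set Implicit Arguments. Unset Strict Implicit. Unset Printing Implicit Defensive.

Notation lx := Nat.lxor.

Fixpoint xm (a b : seq bool) : seq bool :=
  match a, b with
  | [::], _ => b
  | _, [::] => a
  | x :: a', y :: b' => (x (+) y) :: xm a' b'
  end.

Fixpoint comb (bs : seq nat) (a : seq bool) : nat :=
  match bs, a with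
  | b :: bs', x :: a' => lx (if x then b else 0) (comb bs' a')
  | _, _ => 0
  end.

Fixpoint masks (r : nat) : seq (seq bool) :=
  if r is r'.+1 then map (cons false) (masks r') ++ map (cons true) (masks r')
  else [:: [::]].

Fixpoint fit (r : nat) (a : seq bool) : seq bool :=
  if r is r'.+1 then head false a :: fit r' (behead a) else [::].

Definition indep (bs : seq nat) :=
  forall a, comb bs a = 0 -> forall i, i < size bs -> nth false a i = false.

Lemma lx4 a b c d : lx (lx a b) (lx c d) = lx (lx a c) (lx b d).
Proof.
rewrite !PeanoNat.Nat.lxor_assoc; congr lx; rewrite -!PeanoNat.Nat.lxor_assoc; congr lx.
exact: PeanoNat.Nat.lxor_comm.
Qed.

Lemma comb_nil bs : comb bs [::] = 0.
Proof. by case: bs. Qed.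

Lemma nth_xm a b i : nth false (xm a b) i = nth false a i (+) nth false b i.
Proof.
elim: a b i => [|x a IH] [|y b] [|i] //=; by rewrite ?addbF.
Qed.

Lemma size_xm a b : size (xm a b) = maxn (size a) (size b).
Proof.
elim: a b => [|x a IH] [|y b] //=; rewrite ?max0n ?maxn0 //.
by rewrite IH maxnSS.
Qed.

Lemma comb_xm bs a b : comb bs (xm a b) = lx (comb bs a) (comb bs b).
Proof.
elim: bs a b => [|c bs IH] [|x a] [|y b] //=; rewrite ?PeanoNat.Nat.lxor_0_l ?PeanoNat.Nat.lxor_0_r //.
rewrite IH lx4; congr lx.
by case: x; case: y => //=; rewrite ?PeanoNat.Nat.lxor_0_l ?PeanoNat.Nat.lxor_0_r ?PeanoNat.Nat.lxor_nilpotent.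
Qed.

Lemma comb_false bs a : ~~ has id a -> comb bs a = 0.
Proof.
elim: bs a => [|c bs IH] [|x a] //=; rewrite negb_or => /andP[/negbTE -> /IH ->].
by rewrite PeanoNat.Nat.lxor_0_l.
Qed.

Lemma comb_zero bs m : indep bs -> size m <= size bs -> (comb bs m == 0) = ~~ has id m.
Proof.
move=> ind sz; apply/eqP/idP => [H|]; last exact: comb_false.
rewrite -all_predC; apply/(all_nthP false) => i lti /=.
by rewrite (ind _ H) //; apply: leq_trans sz.
Qed.

Lemma comb_fit bs a : comb bs (fit (size bs) a) = comb bs a.
Proof.
elim: bs a => [|c bs IH] [|x a] //=; rewrite ?IH // comb_nil.
by rewrite PeanoNat.Nat.lxor_0_l.
Qed.

Lemma size_fit r a : size (fit r a) = r.
Proof. by elim: r a => [|r IH] a //=; rewrite IH. Qed.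

Lemma fit_cat m t : fit (size m) (m ++ t) = m.
Proof. by elim: m => [|x m IH] //=; rewrite IH. Qed.

Lemma comb_rcons bs x a :
  comb (rcons bs x) a = lx (comb bs a) (if nth false a (size bs) then x else 0).
Proof.
elim: bs a => [|c bs IH] [|y a] /=; rewrite ?PeanoNat.Nat.lxor_0_l ?PeanoNat.Nat.lxor_0_r //.
all: try by case: y; rewrite ?PeanoNat.Nat.lxor_0_r.
all: by rewrite IH PeanoNat.Nat.lxor_assoc.
Qed.

Lemma cons_inj2 (T : Type) (x : T) : injective (cons x).
Proof. by move=> a b [].
Qed.

Lemma mem_masks r m : (m \in masks r) = (size m == r).
Proof.
elim: r m => [|r IH] m /=.
  by rewrite inE; case: m.
rewrite mem_cat; case: m => [|b m] /=.
  by apply/negbTE/norP; split; apply/negP => /mapP[].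
rewrite eqSS -IH; case: b.
- have -> : (true :: m \in map (cons false) (masks r)) = false.
    by apply/negbTE/negP => /mapP[].
  by rewrite (mem_map (@cons_inj2 _ true)).
- have -> : (false :: m \in map (cons true) (masks r)) = false.
    by apply/negbTE/negP => /mapP[].
  by rewrite (mem_map (@cons_inj2 _ false)) orbF.
Qed.

Lemma size_masks r : size (masks r) = 2 ^ r.
Proof. by elim: r => [|r IH] //; rewrite [LHS]/= size_cat !size_map IH expnS mul2n addnn. Qed.

Lemma uniq_masks r : uniq (masks r).
Proof.
elim: r => //= r IH; rewrite cat_uniq !map_inj_uniq //; try exact: cons_inj2.
rewrite IH /= andbT; apply/hasPn => m /mapP[m1 _ ->]; apply/negP => /mapP[m2 _] H; discriminate H.

Qed.
Definition consAt (k : nat) : seq (seq nat * bool) :=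
  match k with
  | 0 => [:: ]
  | 1 => [:: ([:: 0; 1], false)]
  | 2 => [:: ([:: 0; 2], false); ([:: 1; 2], false)]
  | 3 => [:: ([:: 0; 1; 2; 3], true); ([:: 0; 3], false); ([:: 1; 3], false); ([:: 2; 3], false)]
  | 4 => [:: ([:: 0; 4], false); ([:: 1; 4], false); ([:: 2; 4], false); ([:: 3; 4], false)]
  | 5 => [:: ([:: 0; 5], false); ([:: 1; 5], false); ([:: 2; 5], false); ([:: 3; 5], false); ([:: 4; 5], false)]
  | 6 => [:: ([:: 0; 6], false); ([:: 1; 6], false); ([:: 2; 6], false); ([:: 3; 6], false); ([:: 4; 6], false); ([:: 5; 6], false)]
  | 7 => [:: ([:: 4; 5; 6; 7], true); ([:: 0; 7], false); ([:: 1; 7], false); ([:: 2; 7], false); ([:: 3; 7], false); ([:: 4; 7], false); ([:: 5; 7], false); ([:: 6; 7], false)]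
  | 8 => [:: ([:: 0; 8], false); ([:: 1; 8], false); ([:: 2; 8], false); ([:: 3; 8], false); ([:: 4; 8], false); ([:: 5; 8], false); ([:: 6; 8], false); ([:: 7; 8], false)]
  | 9 => [:: ([:: 0; 4; 8; 9], true); ([:: 0; 9], false); ([:: 1; 9], false); ([:: 2; 9], false); ([:: 3; 9], false); ([:: 4; 9], false); ([:: 5; 9], false); ([:: 6; 9], false); ([:: 7; 9], false); ([:: 8; 9], false)]
  | 10 => [:: ([:: 3; 6; 10; 9], true); ([:: 0; 10], false); ([:: 1; 10], false); ([:: 2; 10], false); ([:: 3; 10], false); ([:: 4; 10], false); ([:: 5; 10], false); ([:: 6; 10], false); ([:: 7; 10], false); ([:: 8; 10], false); ([:: 9; 10], false)]
  | 11 => [:: ([:: 1; 5; 10; 11], true); ([:: 0; 11], false); ([:: 1; 11], false); ([:: 2; 11], false); ([:: 3; 11], false); ([:: 4; 11], false); ([:: 5; 11], false); ([:: 6; 11], false); ([:: 7; 11], false); ([:: 8; 11], false); ([:: 9; 11], false); ([:: 10; 11], false)]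
  | 12 => [:: ([:: 0; 12], false); ([:: 1; 12], false); ([:: 2; 12], false); ([:: 3; 12], false); ([:: 4; 12], false); ([:: 5; 12], false); ([:: 6; 12], false); ([:: 7; 12], false); ([:: 8; 12], false); ([:: 9; 12], false); ([:: 10; 12], false); ([:: 11; 12], false)]
  | 13 => [:: ([:: 8; 10; 12; 13], true); ([:: 0; 13], false); ([:: 1; 13], false); ([:: 2; 13], false); ([:: 3; 13], false); ([:: 4; 13], false); ([:: 5; 13], false); ([:: 6; 13], false); ([:: 7; 13], false); ([:: 8; 13], false); ([:: 9; 13], false); ([:: 10; 13], false); ([:: 11; 13], false); ([:: 12; 13], false)]
  | 14 => [:: ([:: 2; 6; 12; 14], true); ([:: 0; 14], false); ([:: 1; 14], false); ([:: 2; 14], false); ([:: 3; 14], false); ([:: 4; 14], false); ([:: 5; 14], false); ([:: 6; 14], false); ([:: 7; 14], false); ([:: 8; 14], false); ([:: 9; 14], false); ([:: 10; 14], false); ([:: 11; 14], false); ([:: 12; 14], false); ([:: 13; 14], false)]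
  | 15 => [:: ([:: 9; 11; 14; 15], true); ([:: 3; 7; 13; 15], true); ([:: 0; 5; 12; 15], true); ([:: 0; 15], false); ([:: 1; 15], false); ([:: 2; 15], false); ([:: 3; 15], false); ([:: 4; 15], false); ([:: 5; 15], false); ([:: 6; 15], false); ([:: 7; 15], false); ([:: 8; 15], false); ([:: 9; 15], false); ([:: 10; 15], false); ([:: 11; 15], false); ([:: 12; 15], false); ([:: 13; 15], false); ([:: 14; 15], false)]
  | _ => [::]
  end.
Definition prow := [:: 0; 0; 0; 0; 1; 1; 1; 1; 2; 3; 2; 3; 2; 2; 3; 3].
Definition pcol := [:: 0; 1; 2; 3; 0; 1; 2; 3; 0; 0; 1; 1; 2; 3; 2; 3].

Definition holdsM (w : seq (seq bool)) (c : seq nat * bool) : bool :=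
  (~~ has id (foldr xm [::] [seq nth [::] w p | p <- c.1])) == c.2.
Definition chkM (w : seq (seq bool)) : bool := all (holdsM w) (consAt (size w).-1).
Definition holdsV (s : seq nat) (c : seq nat * bool) : bool :=
  (foldr lx 0 [seq nth 0 s p | p <- c.1] == 0) == c.2.
Definition chkV (s : seq nat) : bool := all (holdsV s) (consAt (size s).-1).
Definition Qg (T : Type) (chk : seq T -> bool) (u : seq T) : bool :=
  all (fun k => chk (take k.+1 u)) (iota 0 (size u)).

Fixpoint E (r : nat) (w : seq (seq bool)) (k : nat) : seq nat :=
  if k is k'.+1 then
    (let wn := rcons w (rcons (nseq r false) true) in
     if chkM wn then E r.+1 wn k' else [::]) ++
    flatten [seq (let wu := rcons w u in if chkM wu then E r wu k' else [::]) | u <- masks r]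
  else [:: r].

Lemma nth_comb bs w p : nth 0 (map (comb bs) w) p = comb bs (nth [::] w p).
Proof.
case: (ltnP p (size w)) => h; first by rewrite (nth_map [::]).
by rewrite !nth_default ?size_map // comb_nil.
Qed.

Lemma foldr_comb bs l : foldr lx 0 (map (comb bs) l) = comb bs (foldr xm [::] l).
Proof. by elim: l => [|m l IH] /=; rewrite ?comb_nil // IH comb_xm. Qed.

Lemma size_foldr_xm r l : all (fun m => size m <= r) l -> size (foldr xm [::] l) <= r.
Proof.
elim: l => [|m l IH] //= /andP[h1 h2]; rewrite size_xm geq_max h1; exact: IH.
Qed.

Lemma holds_transfer bs v c : indep bs -> all (fun m => size m <= size bs) v ->
  holdsV (map (comb bs) v) c = holdsM v c.
Proof.
move=> ind hv; rewrite /holdsV /holdsM.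
have -> : [seq nth 0 (map (comb bs) v) p | p <- c.1] =
          map (comb bs) [seq nth [::] v p | p <- c.1].
  by rewrite -map_comp; apply: eq_map => p; rewrite /= nth_comb.
rewrite foldr_comb comb_zero //; apply: size_foldr_xm.
apply/allP => m /mapP[p _ ->].
case: (ltnP p (size v)) => h; first by apply: (allP hv); exact: mem_nth.
by rewrite nth_default.
Qed.

Lemma chk_transfer bs v : indep bs -> all (fun m => size m <= size bs) v ->
  chkV (map (comb bs) v) = chkM v.
Proof.
move=> ind hv; rewrite /chkV /chkM size_map; apply: eq_all => c.
exact: holds_transfer.
Qed.

Lemma all_take (T : Type) (P : pred T) n (s : seq T) : all P s -> all P (take n s).
Proof. by rewrite -{1}(cat_take_drop n s) all_cat => /andP[]. Qed.

Lemma Qg_transfer bs w : indep bs -> all (fun m => size m <= size bs) w ->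
  Qg chkV (map (comb bs) w) = Qg chkM w.
Proof.
move=> ind hw; rewrite /Qg size_map; apply: eq_all => k.
by rewrite -map_take chk_transfer // all_take.
Qed.

Lemma Qg_cat (T : Type) (chk : seq T -> bool) s t :
  Qg chk (s ++ t) = Qg chk s && all (fun k => chk (take k.+1 (s ++ t))) (iota (size s) (size t)).
Proof.
rewrite /Qg size_cat iotaD all_cat add0n; congr andb.
apply: eq_in_all => k; rewrite mem_iota add0n => /andP[_ lt].
by rewrite takel_cat.
Qed.

Lemma Qg_rcons (T : Type) (chk : seq T -> bool) s x :
  Qg chk (rcons s x) = Qg chk s && chk (rcons s x).
Proof.
by rewrite -cats1 Qg_cat /= andbT take_oversize // size_cat addn1.
Qed.

Lemma all_flatten (T : Type) (P : pred T) (l : seq (seq T)) :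
  all P (flatten l) = all (all P) l.
Proof. by elim: l => //= s l IH; rewrite all_cat IH. Qed.

Lemma E_ge r w k : all (fun r' => r <= r') (E r w k).
Proof.
elim: k r w => [|k IH] r w /=; first by rewrite leqnn.
rewrite all_cat all_flatten; apply/andP; split.
  case: ifP => // _; apply: sub_all (IH _ _) => r' /=; exact: ltnW.
apply/allP => l /mapP[u _ ->]; case: ifP => // _; exact: IH.
Qed.

Lemma expn_pow m n : m ^ n = Nat.pow m n.
Proof. by elim: n => //= n IH; rewrite expnS IH. Qed.

Lemma lxor_lt n a b : a < 2 ^ n -> b < 2 ^ n -> Nat.lxor a b < 2 ^ n.
Proof.
rewrite expn_pow => /ltP ha /ltP hb; apply/ltP.
case: (PeanoNat.Nat.eq_dec (Nat.lxor a b) 0) => [->|nz].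
  by apply/ltP; rewrite -expn_pow expn_gt0.
apply/PeanoNat.Nat.log2_lt_pow2; first by Lia.lia.
have := PeanoNat.Nat.log2_lxor a b.
case: (PeanoNat.Nat.eq_dec a 0) => [a0|a0]; case: (PeanoNat.Nat.eq_dec b 0) => [b0|b0].
- subst; by rewrite PeanoNat.Nat.lxor_0_r in nz.
- subst; rewrite PeanoNat.Nat.lxor_0_l; move/PeanoNat.Nat.log2_lt_pow2: hb => hb _; apply: hb; Lia.lia.
- subst; rewrite PeanoNat.Nat.lxor_0_r; move/PeanoNat.Nat.log2_lt_pow2: ha => ha _; apply: ha; Lia.lia.
- move/PeanoNat.Nat.log2_lt_pow2: ha => ha; move/PeanoNat.Nat.log2_lt_pow2: hb => hb.
  have h1 := ha ltac:(Lia.lia); have h2 := hb ltac:(Lia.lia). Lia.lia.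
Qed.

Lemma sum_tuple_cons (T : finType) k (F : k.+1.-tuple T -> nat) :
  \sum_(t : k.+1.-tuple T) F t = \sum_(x : T) \sum_(t : k.-tuple T) F [tuple of x :: t].
Proof.
rewrite pair_big /= (reindex (fun p : T * k.-tuple T => [tuple of p.1 :: p.2])) /=.
  by apply: eq_bigr => -[x t].
exists (fun t => (thead t, [tuple of behead t])) => [[x t] _|t _] /=.
  by congr pair; apply: val_inj.
by rewrite -tuple_eta.
Qed.

Section Count.
Variable n : nat.
Local Notation q := (2 ^ n).

Definition G (s : seq nat) (k : nat) : nat :=
  \sum_(t : k.-tuple 'I_q) Qg chkV (s ++ map val t).

Definition Wt (r0 : nat) (L : seq nat) : nat :=
  \sum_(r' <- L) \prod_(r0 <= i < r') (q - 2 ^ i).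

Lemma G_step s k : G s k.+1 = \sum_(x : 'I_q) G (rcons s x) k.
Proof.
rewrite /G sum_tuple_cons; apply: eq_bigr => x _; apply: eq_bigr => t _.
by rewrite /= cat_rcons.
Qed.

Lemma G0 s : Qg chkV s -> G s 0 = 1.
Proof.
move=> h; rewrite /G (eq_bigr (fun _ => 1)) => [|t _].
  by rewrite sum1_card card_tuple expn0.
by rewrite (tuple0 t) /= cats0 h.
Qed.

Lemma G_false s x k : ~~ chkV (rcons s x) -> G (rcons s x) k = 0.
Proof.
move=> h; rewrite /G big1 // => t _.
by rewrite Qg_cat Qg_rcons (negbTE h) andbF.
Qed.

Lemma Wt_step r L : all (fun r' => r.+1 <= r') L -> (q - 2 ^ r) * Wt r.+1 L = Wt r L.
Proof.
move=> h; rewrite /Wt big_distrr /=; apply: eq_big_seq => r' hr'.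
by rewrite (big_ltn (allP h r' hr')).
Qed.

Lemma comb_lt bs a : all (fun b => b < q) bs -> comb bs a < q.
Proof.
elim: bs a => [|c bs IH] [|x a] /= h; rewrite ?expn_gt0 //.
case/andP: h => hc hbs; apply: lxor_lt; last exact: IH.
by case: x => //; rewrite expn_gt0.
Qed.

Lemma main_count k : forall bs w, indep bs -> all (fun b => b < q) bs ->
  all (fun m => size m <= size bs) w -> Qg chkM w ->
  G (map (comb bs) w) k = Wt (size bs) (E (size bs) w k).
Proof.
elim: k => [|k IH] bs w ind hb hw hQ.
  by rewrite G0 ?Qg_transfer // /Wt /= big_cons big_nil big_geq.
set r := size bs; set s := map (comb bs) w.
rewrite G_step.
pose g x := if chkV (rcons s x) then G (rcons s x) k else 0.
have -> : \sum_(x : 'I_q) G (rcons s x) k = \sum_(0 <= x < q) g x.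
  rewrite big_mkord; apply: eq_bigr => x _; rewrite /g.
  by case: ifP => // /negbT h; rewrite G_false.
set S := map (comb bs) (masks r).
have Slt : all (fun x => x < q) S.
  by apply/allP => x /mapP[u _ ->]; exact: comb_lt.
have injS : {in masks r &, injective (comb bs)}.
  move=> u v; rewrite !mem_masks => /eqP hu /eqP hv e.
  have : comb bs (xm u v) = 0 by rewrite comb_xm e PeanoNat.Nat.lxor_nilpotent.
  move/ind => H; apply: (@eq_from_nth _ false); first by rewrite hu hv.
  move=> i hi; have := H i; rewrite nth_xm hu in hi * => /(_ hi).
  by case: (nth false u i); case: (nth false v i).
have uS : uniq S by rewrite (map_inj_in_uniq injS) uniq_masks.
have pS : perm_eq [seq x <- index_iota 0 q | x \in S] S.
  apply: uniq_perm => [||x]; first exact: filter_uniq (iota_uniq _ _).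
    exact: uS.
  rewrite mem_filter mem_index_iota /=; case: (boolP (x \in S)) => //= xS.
  by rewrite (allP Slt).
rewrite (bigID (fun x => x \in S)) /=.
set wn := rcons w (rcons (nseq r false) true).
pose c := if chkM wn then Wt r.+1 (E r.+1 wn k) else 0.
have hnew : forall x, x < q -> x \notin S -> g x = c.
  move=> x xq xS; set bs' := rcons bs x.
  have ind' : indep bs'.
    move=> a ha i; rewrite size_rcons ltnS => hi.
    move: ha; rewrite comb_rcons; case hr: (nth false a (size bs)) => ha.
      exfalso; move/PeanoNat.Nat.lxor_eq: ha => ha; move/negP: xS; apply.
      apply/mapP; exists (fit r a); first by rewrite mem_masks size_fit.
      by rewrite comb_fit.
    rewrite PeanoNat.Nat.lxor_0_r in ha.
    case: (ltngtP i (size bs)) hi => // [lt|->] _; [exact: ind | exact: hr].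
  have hb' : all (fun b => b < q) bs' by rewrite all_rcons xq.
  have hw' : all (fun m => size m <= size bs') wn.
    rewrite all_rcons size_rcons size_rcons size_nseq leqnn /=.
    by apply: sub_all hw => m /= h; apply: leq_trans h _.
  have ews : map (comb bs') w = s.
    apply/eq_in_map => m hm; rewrite comb_rcons nth_default ?PeanoNat.Nat.lxor_0_r //.
    exact: (allP hw).
  have ex : comb bs' (rcons (nseq r false) true) = x.
    rewrite comb_rcons nth_rcons size_nseq ltnn eqxx -comb_fit -cats1.
    have := fit_cat (nseq r false) [:: true]; rewrite size_nseq => ->.
    by rewrite comb_false ?has_nseq ?andbF // PeanoNat.Nat.lxor_0_l.
  have eS : rcons s x = map (comb bs') wn by rewrite map_rcons ews ex.
  rewrite /g /c eS chk_transfer //; case: ifP => // hc.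
  rewrite IH //; first by rewrite size_rcons.
  by rewrite Qg_rcons hQ hc.
rewrite [X in _ + X]big_seq_cond [X in _ + X](eq_bigr (fun _ => c)); last first.
  move=> x /andP[]; rewrite mem_index_iota => /andP[_ xq] /= xS; exact: hnew.
rewrite -[X in _ + X]big_seq_cond big_const_seq iter_addn_0.
have -> : count (fun x => ~~ (x \in S)) (index_iota 0 q) = q - 2 ^ r.
  have := count_predC (mem S) (index_iota 0 q).
  rewrite -size_filter (perm_size pS) size_map size_masks size_iota subn0 => e.
  by rewrite -[in RHS]e addKn.
rewrite addnC -big_filter (perm_big _ pS) big_map /= /Wt big_cat /=; congr addn.
  rewrite /c; case: ifP => hc; last by rewrite big_nil.
  rewrite mulnC Wt_step //; exact: E_ge.
rewrite big_flatten big_map /=; apply: eq_big_seq => u hu.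
have hsu : size u = r by apply/eqP; rewrite -mem_masks.
have hwu : all (fun m => size m <= size bs) (rcons w u) by rewrite all_rcons hw hsu leqnn.
rewrite /g -map_rcons chk_transfer //.
case: ifP => hc; last by rewrite big_nil.
by rewrite IH // Qg_rcons hQ hc.
Qed.

End Count.
Definition quadlist : seq (seq nat * bool) := [:: ([:: 0; 1; 2; 3], true); ([:: 4; 5; 6; 7], true); ([:: 8; 10; 12; 13], true); ([:: 9; 11; 14; 15], true); ([:: 0; 4; 8; 9], true); ([:: 1; 5; 10; 11], true); ([:: 2; 6; 12; 14], true); ([:: 3; 7; 13; 15], true); ([:: 0; 5; 12; 15], true); ([:: 3; 6; 10; 9], true)].
Definition postab : seq (seq nat) := [:: [:: 0; 1; 2; 3]; [:: 4; 5; 6; 7]; [:: 8; 10; 12; 13]; [:: 9; 11; 14; 15]].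

Definition pairlist : seq (seq nat * bool) :=
  flatten [seq [seq ([:: j; i], false) | j <- iota 0 i] | i <- iota 0 16].

Lemma lx_eq0 a b : (lx a b == 0) = (a == b).
Proof. by apply/eqP/eqP => [/PeanoNat.Nat.lxor_eq|->]; last exact: PeanoNat.Nat.lxor_nilpotent. Qed.

Lemma Qg_all16 u : size u = 16 ->
  Qg chkV u = all (fun k => all (holdsV u) (consAt k)) (iota 0 16).
Proof.
move=> hu; rewrite /Qg hu; apply: eq_in_all => k hk'.
have hk : k < 16 by move: hk'; rewrite mem_iota.
rewrite /chkV size_takel ?hu //=.
have H : all (fun k => all (fun c => all (fun p => p <= k) c.1) (consAt k)) (iota 0 16) by [].
have hpos := allP H k hk'.
apply: eq_in_all => c hc; rewrite /holdsV; congr (_ == _); congr (_ == _); congr foldr.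
apply/eq_in_map => p hp; rewrite nth_take //.
by rewrite ltnS; apply: (allP (allP hpos c hc)).
Qed.

Lemma cons_perm : perm_eq (flatten [seq consAt k | k <- iota 0 16]) (quadlist ++ pairlist).
Proof. by vm_compute. Qed.

Lemma pairs_uniq (s : seq nat) : size s = 16 -> all (holdsV s) pairlist = uniq s.
Proof.
move=> hs; rewrite /pairlist all_flatten all_map.
apply/allP/(uniqP 0) => [H i j hi hj e|inj i hi].
  rewrite !inE hs in hi hj.
  case: (ltngtP i j) => // lt; exfalso.
  - have := H j; rewrite mem_iota add0n hj => /(_ isT) /allP /(_ ([:: i; j], false)).
    rewrite /holdsV /= PeanoNat.Nat.lxor_0_r lx_eq0 e eqxx => h; suff : true == false by []; apply: h.
    by apply/mapP; exists i; rewrite // mem_iota add0n.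
  - have := H i; rewrite mem_iota add0n hi => /(_ isT) /allP /(_ ([:: j; i], false)).
    rewrite /holdsV /= PeanoNat.Nat.lxor_0_r lx_eq0 e eqxx => h; suff : true == false by []; apply: h.
    by apply/mapP; exists j; rewrite // mem_iota add0n.
apply/allP => c /mapP[j hj ->]; rewrite /holdsV /= PeanoNat.Nat.lxor_0_r lx_eq0 eqbF_neg.
rewrite mem_iota add0n in hi hj; apply/negP => /eqP e.
have hi16 : i < 16 by lia.
rewrite mem_iota add0n in hj.
have hj16 : j < 16 by lia.
have ji : j = i by apply: inj => //; rewrite inE hs.
by move: hj; rewrite ji ltnn andbF.
Qed.

Definition ordm (m k : nat) : 'I_m.+1 := Ordinal (ltn_pmod k (ltn0Sn m)).
Definition idx (p : 'I_4 * 'I_4) : 'I_16 := ordm 15 (nth 0 (nth [::] postab p.1) p.2).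
Definition pinv (k : 'I_16) : 'I_4 * 'I_4 := (ordm 3 (nth 0 prow k), ordm 3 (nth 0 pcol k)).

Lemma ordm_enum m (k : 'I_m.+1) : k \in [seq ordm m i | i <- iota 0 m.+1].
Proof.
apply/mapP; exists (val k); first by rewrite mem_iota add0n ltn_ord.
by apply: val_inj; rewrite /= modn_small.
Qed.

Lemma idx_pinv k : idx (pinv k) = k.
Proof.
have H : all (fun k => idx (pinv k) == k) [seq ordm 15 i | i <- iota 0 16] by vm_compute.
exact: (eqP (allP H k (ordm_enum k))).
Qed.

Lemma pinv_idx p : pinv (idx p) = p.
Proof.
have H : all (fun i => all (fun j => pinv (idx (i, j)) == (i, j))
  [seq ordm 3 i | i <- iota 0 4]) [seq ordm 3 i | i <- iota 0 4] by vm_compute.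
case: p => i j; exact: (eqP (allP (allP H i (ordm_enum i)) j (ordm_enum j))).
Qed.

Lemma forall4 (P : pred 'I_4) :
  [forall i, P i] = [&& P (ix 0), P (ix 1), P (ix 2) & P (ix 3)].
Proof.
apply/forallP/and4P => [H|[h0 h1 h2 h3] i]; first by split; apply: H.
have e : forall m (hm : m < 4), Ordinal hm = ix m.
  by move=> m hm; apply: val_inj; rewrite /ix /= inordK.
case: i => m hm; rewrite e; move: hm; case: m => [|[|[|[|m]]]] //.
Qed.

Section Bridge.
Variable n : nat.
Local Notation q := (2 ^ n).

Definition arr (t : 16.-tuple 'I_q) : array44 n := [ffun p => tnth t (idx p)].
Definition tup (A : array44 n) : 16.-tuple 'I_q := [tuple A (pinv k) | k < 16].

Lemma val_arr t a b : a < 4 -> b < 4 ->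
  nat_of_ord (arr t (ix a, ix b)) = nth 0 (map val t) (nth 0 (nth [::] postab a) b).
Proof.
move=> ha hb; rewrite ffunE.
have hlt : nth 0 (nth [::] postab a) b < 16.
  by move: ha hb; case: a => [|[|[|[|a]]]] //; case: b => [|[|[|[|b]]]].
have vi : nat_of_ord (idx (ix a, ix b)) = nth 0 (nth [::] postab a) b.
  by rewrite /idx /ordm /ix /= !inordK // modn_small.
set x0 := tnth t (idx (ix a, ix b)).
by rewrite {1}/x0 (tnth_nth x0) vi (nth_map x0) ?size_tuple.
Qed.

Lemma card_arr (P : pred (array44 n)) :
  #|[pred A | P A]| = \sum_(t : 16.-tuple 'I_q) P (arr t).
Proof.
rewrite -sum1_card (reindex arr) /=; last first.
  exists tup => [t _|A _].
    by apply: eq_from_tnth => k; rewrite tnth_mktuple ffunE idx_pinv.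
  by apply/ffunP => p; rewrite ffunE tnth_mktuple pinv_idx.
by rewrite big_mkcond; apply: eq_bigr => t _; rewrite inE; case: (P (arr t)).
Qed.

Lemma inj_arr t : injectiveb (arr t) = uniq (map val t).
Proof.
rewrite (map_inj_uniq val_inj); apply/injectiveP/tuple_uniqP => H i j e.
  have e' : arr t (pinv i) = arr t (pinv j) by rewrite !ffunE !idx_pinv.
  by rewrite -(idx_pinv i) -(idx_pinv j) (H _ _ e').
move: e; rewrite !ffunE => /H e.
by rewrite -(pinv_idx i) -(pinv_idx j) e.
Qed.

Lemma quads_arr t :
  [&& [forall i, row_quad (arr t) i], [forall j, col_quad (arr t) j],
      diag_quad (arr t) & antidiag_quad (arr t)] = all (holdsV (map val t)) quadlist.
Proof.
rewrite !forall4 /row_quad /col_quad /diag_quad /antidiag_quad /is_quad !val_arr //=.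
rewrite /holdsV /= !PeanoNat.Nat.lxor_0_r !PeanoNat.Nat.lxor_assoc !eqb_id.
by rewrite !andbA andbT.
Qed.

Lemma magic_arr t : magic_quad_square (arr t) = Qg chkV (map val t).
Proof.
have hs : size (map val t) = 16 by rewrite size_map size_tuple.
rewrite /magic_quad_square /quad_square inj_arr quads_arr Qg_all16 //.
rewrite -all_map -all_flatten (perm_all _ cons_perm) all_cat pairs_uniq //.
by rewrite andbC.
Qed.

End Bridge.

Definition ff (n r : nat) : nat := \prod_(0 <= j < r) (2 ^ n - 2 ^ j).
Arguments ff : simpl never.
Lemma arith n : 4 <= n ->
  0 * ff n 0 + (0 * ff n 1 + (0 * ff n 2 + (0 * ff n 3 + (160 * ff n 4 + (2730 * ff n 5 +
  (2837 * ff n 6 + (171 * ff n 7 + (1 * ff n 8 + 0)))))))) =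
  2 ^ n * (2 ^ n - 1) * (2 ^ n - 2) * (2 ^ n - 4) * (2 ^ n - 8) *
  (10 + 85 * (2 ^ n - 16) + 43 * (2 ^ n - 16) * (2 ^ n - 32)
      + (2 ^ n - 16) * (2 ^ n - 32) * (2 ^ n - 64)).
Proof.
move=> hn; rewrite /ff /index_iota /= !big_cons !big_nil.
rewrite expn0 expn1 (_ : 2 ^ 2 = 4) // (_ : 2 ^ 3 = 8) // (_ : 2 ^ 4 = 16) //.
rewrite (_ : 2 ^ 5 = 32) // (_ : 2 ^ 6 = 64) // (_ : 2 ^ 7 = 128) //.
have [n4|n4] := leqP n 4.
  have -> : n = 4 by lia.
  set q := 2 ^ 4; have q16 : q = 16 by [].
  have -> : q - 1 = 15 by lia.
  have -> : q - 2 = 14 by lia.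
  have -> : q - 4 = 12 by lia.
  have -> : q - 8 = 8 by lia.
  have -> : q - 16 = 0 by lia.
  have -> : q - 32 = 0 by lia.
  have -> : q - 64 = 0 by lia.
  have -> : q - 128 = 0 by lia.
  rewrite q16; ring.
have [n5|n5] := leqP n 5.
  have -> : n = 5 by lia.
  set q := 2 ^ 5; have q16 : q = 32 by [].
  have -> : q - 1 = 31 by lia.
  have -> : q - 2 = 30 by lia.
  have -> : q - 4 = 28 by lia.
  have -> : q - 8 = 24 by lia.
  have -> : q - 16 = 16 by lia.
  have -> : q - 32 = 0 by lia.
  have -> : q - 64 = 0 by lia.
  have -> : q - 128 = 0 by lia.
  rewrite q16; ring.
have [n6|n6] := leqP n 6.
  have -> : n = 6 by lia.
  set q := 2 ^ 6; have q16 : q = 64 by [].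
  have -> : q - 1 = 63 by lia.
  have -> : q - 2 = 62 by lia.
  have -> : q - 4 = 60 by lia.
  have -> : q - 8 = 56 by lia.
  have -> : q - 16 = 48 by lia.
  have -> : q - 32 = 32 by lia.
  have -> : q - 64 = 0 by lia.
  have -> : q - 128 = 0 by lia.
  rewrite q16; ring.
have h7 : 2 ^ 7 <= 2 ^ n by rewrite leq_pexp2l.
set q := 2 ^ n; have [t ht] : exists t, q = 128 + t by exists (q - 128); rewrite /q; lia.
  have -> : q - 1 = 127 + t by lia.
  have -> : q - 2 = 126 + t by lia.
  have -> : q - 4 = 124 + t by lia.
  have -> : q - 8 = 120 + t by lia.
  have -> : q - 16 = 112 + t by lia.
  have -> : q - 32 = 96 + t by lia.
  have -> : q - 64 = 64 + t by lia.
  have -> : q - 128 = 0 + t by lia.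
rewrite ht; ring.
Qed.

Lemma Wt_ff n L : Wt n 0 L = \sum_(r <- L) ff n r.
Proof. by []. Qed.

Definition Lres := E 0 [::] 16.
Arguments Lres : simpl never.
Definition LP (L : seq nat) : bool :=
  all (fun r => r < 9) L &&
  ([seq count_mem i L | i <- iota 0 9] == [:: 0; 0; 0; 0; 160; 2730; 2837; 171; 1]).

Lemma Lres_ok : LP Lres.
Proof. vm_cast_no_check (erefl true). Qed.

Lemma sum_count (F : nat -> nat) L m : all (fun r => r < m) L ->
  \sum_(r <- L) F r = \sum_(i <- iota 0 m) count_mem i L * F i.
Proof.
elim: L => [|a L IH] /=.
  by move=> _; rewrite big_nil big1 // => i _; rewrite mul0n.
move=> /andP[ha hL]; rewrite big_cons IH //.
rewrite [RHS](eq_bigr (fun i => (a == i) * F i + count_mem i L * F i)); last first.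
  by move=> i _; rewrite /= mulnDl.
rewrite big_split /=; congr addn.
rewrite (bigD1_seq a) ?mem_iota ?iota_uniq //= eqxx mul1n big1 ?addn0 // => i /negbTE.
by rewrite eq_sym => ->.
Qed.

Theorem mainTheorem9 (n : nat) (hn : 4 <= n) :
  #|[pred A : array44 n | magic_quad_square A]| =
  2 ^ n * (2 ^ n - 1) * (2 ^ n - 2) * (2 ^ n - 4) * (2 ^ n - 8) *
  (10 + 85 * (2 ^ n - 16) + 43 * (2 ^ n - 16) * (2 ^ n - 32)
      + (2 ^ n - 16) * (2 ^ n - 32) * (2 ^ n - 64)).
Proof.
rewrite card_arr.
have -> : \sum_(t : 16.-tuple 'I_(2 ^ n)) magic_quad_square (arr t) = G n (map (comb [::]) [::]) 16.
  by apply: eq_bigr => t _; rewrite magic_arr.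
rewrite main_count //.
rewrite (_ : size (@nil nat) = 0) // -/Lres.
rewrite Wt_ff.
have := Lres_ok; rewrite /LP => /andP[h1 /eqP h2].
have hc : forall i, i < 9 -> count_mem i Lres = nth 0 [:: 0; 0; 0; 0; 160; 2730; 2837; 171; 1] i.
  move=> i hi; rewrite -h2.
  rewrite (nth_map 0); last by rewrite size_iota.
  by rewrite nth_iota ?add0n.
rewrite (sum_count (ff n) h1) [iota 0 9]/= !big_cons big_nil.
rewrite (hc 0 isT) (hc 1 isT) (hc 2 isT) (hc 3 isT) (hc 4 isT) (hc 5 isT) (hc 6 isT) (hc 7 isT) (hc 8 isT).
exact: (arith hn).
Qed.
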